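(* Let $A$ be a countable non-empty set of agents and, for each $i\in A$, let $\mathbf{S}_i$ be a compact topological space; put $\mathbf{S}=\prod_{i\in A}\mathbf{S}_i$ with the product topology. Let $\mathcal{G}$ be a compact-strategies, open-preferences class of normal-form games over these agents and strategy spaces, and let $\mathcal{G}'\subseteq\mathcal{G}$ be dense in $\mathcal{G}$. If every game $G\in\mathcal{G}'$ has a Nash equilibrium, then every game $G\in\mathcal{G}$ has a Nash equilibrium.
   Context: A normal-form game over $A$ and $(\mathbf{S}_i)_{i\in A}$ is given by a family of preference relations $\prec_i^G\subseteq\mathbf{S}\times\mathbf{S}$, $i\in A$. A strategy profile $\sigma\in\mathbf{S}$ is a Nash equilibrium of $G$ if there is no agent $i$ and no $s_i\in\mathbf{S}_i$ with $\sigma\prec^G_i\sigma_{i\mapsto s_i}$, where $\sigma_{i\mapsto s_i}$ agrees with $\sigma$ except that its $i$-th component is $s_i$. A class $\mathcal{G}$ of such games (all with the same agents and strategy spaces) is called compact-strategies, open-preferences if every $\mathbf{S}_i$ is compact and $\mathcal{G}$ carries a topology such that the preferences depend continuously (uniformly) on the game: for each $i\in A$ the set $\{(G,\sigma,\sigma')\in\mathcal{G}\times\mathbf{S}\times\mathbf{S}\mid \sigma\prec^G_i\sigma'\}$ is open in $\mathcal{G}\times\mathbf{S}\times\mathbf{S}$ (in particular each $\prec_i^G$ is an open subset of $\mathbf{S}\times\mathbf{S}$). Density of $\mathcal{G}'$ refers to this topology on $\mathcal{G}$. *)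

(* Defs.v *)
From HB Require Import structures.
From mathcomp Require Import all_boot all_order.
From mathcomp Require Import all_classical all_reals all_analysis.
Set Implicit Arguments. Unset Strict Implicit. Unset Printing Implicit Defensive.
Local Open Scope classical_set_scope.

(* A normal-form game over agents A and strategy spaces S : a family of
   preference relations, pref i sigma sigma' meaning sigma <_i sigma'. *)
Definition game (A : Type) (S : A -> Type) :=
  A -> (forall i, S i) -> (forall i, S i) -> Prop.

Definition deviate (A : eqType) (S : A -> Type) (sigma : forall j, S j)
  (i : A) (s : S i) : forall j, S j := @dfwith A S sigma i s.

Definition nash_equilibrium (A : eqType) (S : A -> Type) (G : game S)
  (sigma : forall j, S j) : Prop :=
  ~ exists (i : A) (s : S i), G i sigma (deviate sigma s).

(* A class of games: a topological space Gamma of (indices of) games,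
   injectively mapped to games, such that preferences are (uniformly)
   open in the game and both profiles. *)
Definition open_preferences (A : Type) (S : A -> topologicalType)
  (Gamma : topologicalType) (g : Gamma -> game S) : Prop :=
  forall i : A,
    open [set x : Gamma * (prod_topology S * prod_topology S) |
           g x.1 i x.2.1 x.2.2].

Definition compact_strategies (A : Type) (S : A -> topologicalType) : Prop :=
  forall i, compact [set: S i].

(* Main.v *)
Require Import Defs.
From HB Require Import structures.
From mathcomp Require Import all_boot all_order.
From mathcomp Require Import all_classical all_reals all_analysis.
Local Open Scope classical_set_scope.

Lemma prod_cont (I : eqType) (K : I -> topologicalType) (X : topologicalType)
  (f : X -> prod_topology K) : (forall i, continuous (fun x => f x i)) -> continuous f.
Proof.
move=> cf x; apply/cvg_sup.
move=> i; exact: (@continuous_comp_initial _ _ _ (fun h : prod_topology K => h i) f (cf i)).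
Qed.

Lemma dfwith_cont1 (I : eqType) (K : I -> topologicalType) (i : I) (s : K i) :
  continuous (fun f : prod_topology K => (dfwith f i s : prod_topology K)).
Proof.
apply: prod_cont => j.
have [<-|ij] := eqVneq i j.
  rewrite (_ : (fun x : prod_topology K => dfwith x i s i) = fun=> s).
    exact: cst_continuous.
  by apply: funext => x; rewrite dfwithin.
rewrite (_ : (fun x : prod_topology K => dfwith x i s j) = proj j).
  exact: proj_continuous.
by apply: funext => x; rewrite dfwithout.
Qed.

Lemma compactT_prod (A : countType) (S : A -> topologicalType) :
  compact_strategies S -> compact [set: prod_topology S].
Proof.
move=> cS.
have := @tychonoff A S (fun _ => setT) cS.
by rewrite (_ : [set f : forall i, S i | forall i, setT (f i)] = setT) //; apply/seteqP; split.
Qed.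

Theorem theorem8 (A : countType) (S : A -> topologicalType)
  (Gamma : topologicalType) (g : Gamma -> game S) (G' : set Gamma) :
  inhabited A ->
  compact_strategies S ->
  injective g ->
  open_preferences g ->
  dense G' ->
  (forall x, G' x -> exists sigma : prod_topology S, nash_equilibrium (g x) sigma) ->
  forall x : Gamma, exists sigma : prod_topology S, nash_equilibrium (g x) sigma.
Proof.
move=> _ cS _ oP dG NE x.
have [//|nNE] := pselect (exists sigma : prod_topology S, nash_equilibrium (g x) sigma).
exfalso.
have := @compactT_prod A S cS; move/compact_near_coveringP.
move=> /(_ Gamma (nbhs x) (fun y (tau : prod_topology S) =>
   exists (i : A) (s : S i), g y i tau (deviate tau s)) _).
move=> Hc.
have Hn : \forall y \near x, [set: prod_topology S] `<=` (fun tau : prod_topology S =>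
   exists (i : A) (s : S i), g y i tau (deviate tau s)).
  apply: Hc => tau _.
  have : ~ nash_equilibrium (g x) tau by move=> h; apply: nNE; exists tau.
  move=> /contrapT [i [s Hg]].
  have := oP i; rewrite openE => /(_ (x, (tau, deviate tau s)) Hg).
  case=> -[U V] [Ux Vtd] UVO.
  case: Vtd => -[V1 V2] [V1t V2d] V12.
  have cd := @dfwith_cont1 A S i s tau V2 V2d.
  exists (V1 `&` (fun t : prod_topology S => dfwith t i s) @^-1` V2, U).
    split => //; exact: filterI.
  case=> t y [[V1t2 V2t] Uy]; exists i, s.
  apply: (UVO (y, (t, deviate t s))); split => //.
  by apply: V12; split.
move: Hn; rewrite /prop_near1 nbhsE => -[W [oW Wx] WU].
  have [y [Wy G'y]] := dG W (ex_intro _ x Wx) oW.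
  have [tau Ntau] := NE y G'y.
  by apply: Ntau; apply: (WU y Wy tau).
Qed.
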